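(* Let $G\subset\mathbb{R}^d$ be a bounded domain with $C^3$ boundary, let $f:\bar G\to[0,\infty)$ satisfy: $f_{\min}:=\inf_{x\in\bar G}f(x)>0$, $f$ has a unique minimizer in $\bar G$, and $|f(x)-f(y)|\le L_f|x-y|$ for all $x,y\in\bar G$. Let $\alpha,\beta,\sigma>0$. For $\mu\in\mathcal P(\bar G)$ set $\bar X^\mu=\int_{\bar G}xe^{-\alpha f(x)}\mu(dx)\big/\int_{\bar G}e^{-\alpha f(x)}\mu(dx)$ and define $$b(t,x,\mu)=\beta(x-\bar X^\mu),\qquad\sigma(t,x,\mu)=\sigma\,\mathrm{Diag}(x-\bar X^\mu).$$ Then there exists $L>0$ such that for all $t\ge0$, $x,y\in\bar G$ and $\mu^1,\mu^2\in\mathcal P(\bar G)$, $$|b(t,x,\mu^1)-b(t,y,\mu^2)|+|\sigma(t,x,\mu^1)-\sigma(t,y,\mu^2)|\le L\big(|x-y|+\mathcal W_4(\mu^1,\mu^2)\big),$$ and $b,\sigma$ are continuous in $t$.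
   Context: $\mathcal P(\bar G)$ is the set of Borel probability measures on $\bar G$; $\mathcal W_4$ is the Wasserstein 4-distance; $\mathrm{Diag}(v)$ is the diagonal matrix with diagonal $v$; the matrix norm is the Frobenius norm. *)

(* Defs.v *)
From HB Require Import structures.
From mathcomp Require Import all_boot all_order all_algebra.
From mathcomp Require Import all_classical all_reals all_analysis.
Set Implicit Arguments. Unset Strict Implicit. Unset Printing Implicit Defensive.
Import Order.TTheory GRing.Theory Num.Theory.
Import numFieldNormedType.Exports.
Local Open Scope classical_set_scope.
Local Open Scope ring_scope.

Section Defs.
Variables (R : realType) (d : nat).

Definition fnorm m n (A : 'M[R]_(m, n)) : R :=
  Num.sqrt (\sum_(i < m) \sum_(j < n) (A i j) ^+ 2).

Definition enorm (x : 'rV[R]_d) : R := fnorm x.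

Fixpoint Ck (k : nat) (f : 'rV[R]_d -> R) : Prop :=
  match k with
  | 0%N => continuous f
  | k.+1 => continuous f /\
      forall v : 'rV[R]_d, (forall x, derivable f x v) /\ Ck k ('D_v f)
  end.

Definition bounded_domain (G : set 'rV[R]_d) : Prop :=
  G !=set0 /\ open G /\ connected G /\ exists M : R, forall x, G x -> enorm x <= M.

(* C^3 boundary (local defining function): around every boundary point x0 there
   are r > 0 and a C^3 function phi with nonvanishing gradient on the ball
   such that G coincides with {phi < 0} in the ball *)
Definition C3_boundary (G : set 'rV[R]_d) : Prop :=
  forall x0, (closure G `\` G) x0 ->
    exists r : R, 0 < r /\ exists phi : 'rV[R]_d -> R, Ck 3 phi /\
      forall x, enorm (x - x0) < r ->
        (exists v, 'D_v phi x != 0) /\ (G x <-> phi x < 0).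

Definition Rd := g_sigma_algebraType (@open 'rV[R]_d).

(* P(Gbar): Borel probability measures on R^d concentrated on Gbar *)
Definition probOn (Gbar : set 'rV[R]_d) (mu : probability Rd R) : Prop :=
  mu (Gbar : set Rd) = 1%E.

Definition is_coupling (mu nu : probability Rd R) (pi : probability (Rd * Rd)%type R) : Prop :=
  forall A : set Rd, measurable A ->
    pi (fst @^-1` A) = mu A /\ pi (snd @^-1` A) = nu A.

Definition W4 (mu nu : probability Rd R) : R :=
  powR (fine (ereal_inf [set c | exists pi, is_coupling mu nu pi /\
      c = (\int[pi]_z ((enorm ((z.1 : 'rV[R]_d) - z.2)) ^+ 4)%:E)%E])) (4%:R^-1).

Definition Xbar (Gbar : set 'rV[R]_d) (alpha : R) (f : 'rV[R]_d -> R)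
  (mu : probability Rd R) : 'rV[R]_d :=
  \row_i ((\int[mu]_(x in (Gbar : set Rd)) ((x : 'rV[R]_d) 0 i * expR (- alpha * f x)))
          / (\int[mu]_(x in (Gbar : set Rd)) expR (- alpha * f x))).

Definition bdrift Gbar alpha f (beta : R) (t : R) (x : 'rV[R]_d) mu : 'rV[R]_d :=
  beta *: (x - Xbar Gbar alpha f mu).

Definition sdiff Gbar alpha f (sigma : R) (t : R) (x : 'rV[R]_d) mu : 'M[R]_d :=
  sigma *: diag_mx (x - Xbar Gbar alpha f mu).

End Defs.

(* Main.v *)
Require Import Defs.
From HB Require Import structures.
From mathcomp Require Import all_boot all_order all_algebra.
From mathcomp Require Import all_classical all_reals all_analysis.
From mathcomp Require Import ring lra.
From mathcomp Require Import measurable_realfun.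
Set Implicit Arguments. Unset Strict Implicit. Unset Printing Implicit Defensive.
Import Order.TTheory GRing.Theory Num.Theory.
Import numFieldNormedType.Exports.
Local Open Scope classical_set_scope.
Local Open Scope ring_scope.
Section Norms.
Variables (R : realType) (d : nat).
Implicit Types (x y v : 'rV[R]_d).

Lemma enormE v : enorm v = Num.sqrt (\sum_j (v ord0 j) ^+ 2).
Proof. by rewrite /enorm /fnorm big_ord1. Qed.

Lemma enorm_ge0 v : 0 <= enorm v.
Proof. by rewrite enormE sqrtr_ge0. Qed.

Lemma coord_le_enorm v i : `|v ord0 i| <= enorm v.
Proof.
rewrite enormE -sqrtr_sqr ler_wsqrtr //.
rewrite (bigD1 i) //= lerDl sumr_ge0 // => j _; exact: sqr_ge0.
Qed.

Lemma enorm_le_sum v : enorm v <= \sum_j `|v ord0 j|.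
Proof.
have h0 : 0 <= \sum_j `|v ord0 j| by apply: sumr_ge0 => j _.
rewrite enormE -[X in _ <= X](ger0_norm h0) -sqrtr_sqr ler_wsqrtr //.
rewrite expr2 mulr_suml; apply: ler_sum => j _.
rewrite -real_normK ?num_real // expr2 ler_wpM2l //.
rewrite (bigD1 j) //= lerDl sumr_ge0 //.
Qed.

Lemma enormZ (c : R) v : enorm (c *: v) = `|c| * enorm v.
Proof.
rewrite !enormE.
under eq_bigr do rewrite mxE exprMn.
by rewrite -mulr_sumr sqrtrM ?sqr_ge0 // sqrtr_sqr.
Qed.

Lemma enormN v : enorm (- v) = enorm v.
Proof. by rewrite -scaleN1r enormZ normrN1 mul1r. Qed.

Lemma fnorm_diag (c : R) v : fnorm (c *: diag_mx v) = `|c| * enorm v.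
Proof.
rewrite -enormZ enormE /fnorm; congr Num.sqrt.
apply: eq_bigr => i _; rewrite (bigD1 i) //= big1 ?addr0.
  by rewrite !mxE eqxx mulr1n.
by move=> j /negbTE ji; rewrite !mxE eq_sym ji mulr0n mulr0 expr0n.
Qed.

Lemma coord_le_mxnorm v i : `|v ord0 i| <= `|v|.
Proof.
have -> : `|v| = mx_norm v by [].
rewrite mx_normrE.
exact: (le_bigmax _ (fun ij : 'I_1 * 'I_d => `|v ij.1 ij.2|) (ord0, i)).
Qed.

Lemma enorm_le_mxnorm v : enorm v <= d%:R * `|v|.
Proof.
apply: (le_trans (enorm_le_sum v)).
have -> : d%:R * `|v| = \sum_(j < d) `|v| by rewrite sumr_const card_ord mulr_natl.
apply: ler_sum => j _; exact: coord_le_mxnorm.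
Qed.

End Norms.
Section Meas.
Variables (R : realType) (d : nat).

Lemma open_meas (U : set 'rV[R]_d) : open U -> measurable (U : set (Rd R d)).
Proof. by move=> oU; apply: sub_sigma_algebra. Qed.

Lemma closed_meas (C : set 'rV[R]_d) : closed C -> measurable (C : set (Rd R d)).
Proof.
move=> cC; rewrite -(setCK C); apply: measurableC; apply: open_meas.
exact: closed_openC.
Qed.

Lemma lip_measurable (D : set 'rV[R]_d) (g : 'rV[R]_d -> R) (K : R) :
  closed D -> (forall x y, D x -> D y -> `|g x - g y| <= K * enorm (x - y)) ->
  measurable_fun (D : set (Rd R d)) (g : Rd R d -> R).
Proof.
move=> cD hL.
set K' := `|K| + 1.
have K'0 : 0 < K' by rewrite /K'; apply: ltr_pwDr => //.
have hL' : forall x y, D x -> D y -> `|g x - g y| <= K' * enorm (x - y).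
  move=> x y Dx Dy; apply: (le_trans (hL x y Dx Dy)); apply: ler_wpM2r.
    exact: enorm_ge0.
  rewrite /K'; apply: (le_trans (ler_norm K)); lra.
apply: (measurability _ (measurable_realfun.RGenOpens.measurableE R)).
move=> _ [_ [a [b ->]] <-].
set P := [set x : 'rV[R]_d | D x /\ a < g x < b].
set r := fun x => Order.min (g x - a) (b - g x) / (K' * (d%:R + 1)).
have dK0 : 0 < K' * (d%:R + 1) by apply: mulr_gt0 => //; apply: ltr_pwDr.
set U := \bigcup_(x in P) ball x (r x).
have -> : D `&` g @^-1` `]a, b[%classic = D `&` U.
  apply/seteqP; split => y [Dy].
    rewrite /= in_itv /= => /andP[ay yb]; split => //.
    exists y; first by split => //; apply/andP.
    apply: ballxx; apply: divr_gt0 => //; rewrite lt_min; apply/andP; split; lra.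
  move=> [x [Dx /andP[ax xb]]]; rewrite mx_norm_ball /ball_ /= => hxy.
  split => //; rewrite /= in_itv /=.
  have m1 : Order.min (g x - a) (b - g x) <= g x - a by rewrite ge_min lexx.
  have m2 : Order.min (g x - a) (b - g x) <= b - g x by rewrite ge_min lexx orbT.
  have e1 := enorm_le_mxnorm (x - y).
  have e2 := hL' x y Dx Dy.
  have hr : `|x - y| * (K' * (d%:R + 1)) < Order.min (g x - a) (b - g x).
    by rewrite -ltr_pdivlMr.
  have hd : 0 <= d%:R :> R by [].
  have hn : 0 <= `|x - y| by [].
  have e3 : K' * enorm (x - y) <= K' * (d%:R * `|x - y|) by rewrite ler_pM2l.
  have e4 : K' * (d%:R * `|x - y|) <= `|x - y| * (K' * (d%:R + 1)).
    have := mulr_ge0 hn (ltW K'0); nra.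
  move: e2; rewrite ler_norml => /andP[e2 e2'].
  apply/andP; split; lra.
apply: measurableI; first exact: closed_meas.
apply: open_meas; apply: bigcup_open => x _; exact: ball_open.
Qed.

End Meas.
Section Transport.
Variables (R : realType) (d : nat).
Local Notation T := (Rd R d).

Lemma coord_meas (j : 'I_d) :
  measurable_fun (setT : set T) (fun x : 'rV[R]_d => x ord0 j).
Proof.
apply: (@lip_measurable R d setT _ 1); first exact: closedT.
move=> x y _ _; rewrite mul1r; have := coord_le_enorm (x - y) j.
by rewrite !mxE.
Qed.

Lemma cost_meas : measurable_fun (setT : set (T * T)%type)
  (fun z : (T * T)%type => enorm ((z.1 : 'rV[R]_d) - z.2) ^+ 4).
Proof.
have -> : (fun z : (T * T)%type => enorm ((z.1 : 'rV[R]_d) - z.2) ^+ 4) =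
  (fun z : (T * T)%type =>
     (\sum_j (((z.1 : 'rV[R]_d) ord0 j) - ((z.2 : 'rV[R]_d) ord0 j)) ^+ 2) ^+ 2).
  apply/funext => z; rewrite enormE (_ : 4 = 2 * 2)%N // exprM sqr_sqrtr.
    by congr (_ ^+ 2); apply: eq_bigr => j _; rewrite !mxE.
  by apply: sumr_ge0 => j _; exact: sqr_ge0.
apply: measurable_funX; apply: measurable_sum => j.
apply: measurable_funX; apply: measurable_funB.
  exact: (measurableT_comp (coord_meas j) measurable_fst).
exact: (measurableT_comp (coord_meas j) measurable_snd).
Qed.

Lemma bint d' (U : measurableType d') (mu : probability U R) (h : U -> R) (B : R) :
  measurable_fun setT h -> (forall x, `|h x| <= B) ->
  mu.-integrable setT (EFin \o h).
Proof.
move=> mh hb; apply: (measurable_bounded_integrable measurableT _ mh).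
  by apply: (le_lt_trans (probability_le1 mu measurableT)); exact: ltey.
exists B; split; first exact: num_real.
move=> M hM x _ /=; exact: le_trans (hb x) (ltW hM).
Qed.

Lemma tw (t w : R) : 0 <= t -> 0 < w -> t <= w + t ^+ 4 / w ^+ 3.
Proof.
move=> t0 w0.
have w30 : 0 < w ^+ 3 by apply: exprn_gt0.
rewrite -(ler_pM2r w30) mulrDl divfK ?lt0r_neq0 //.
have [tw|wt] := lerP t w.
  have : t * w ^+ 3 <= w * w ^+ 3 by rewrite ler_pM2r.
  have := exprn_ge0 4 t0; lra.
have : w ^+ 3 <= t ^+ 3 by rewrite lerXn2r // ?nnegrE ?ltW.
move=> h; have : t * w ^+ 3 <= t * t ^+ 3 by rewrite ler_wpM2l.
rewrite -exprS; have := exprn_ge0 4 (ltW w0); lra.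
Qed.

End Transport.
Section Transport2.
Variables (R : realType) (d : nat).
Local Notation T := (Rd R d).

Lemma marg (D : set 'rV[R]_d) (g : 'rV[R]_d -> R) (K Bg : R)
  (cD : closed D) (gb : forall x, D x -> `|g x| <= Bg)
  (gl : forall x y, D x -> D y -> `|g x - g y| <= K * enorm (x - y))
  (mu : probability T R) (pi : probability (T * T)%type R)
  (p : (T * T)%type -> T) (mp : measurable_fun setT p)
  (hm : forall A : set T, measurable A -> pi (p @^-1` A) = mu A) :
  (\int[mu]_(x in (D : set T)) (g x)%:E =
   \int[pi]_z (((g \_ D) : T -> R) (p z))%:E)%E.
Proof.
have mD := closed_meas cD.
have mg := lip_measurable cD gl.
have mgt : measurable_fun (setT : set T) ((g \_ D) : T -> R).
  exact: (measurable_restrictT (g : T -> R) mD).1 mg.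
transitivity (\int[mu]_x ((((g \_ D) : T -> R) x)%:E))%E.
  rewrite integral_mkcond; apply: eq_integral => x _; rewrite /patch.
  by case: ifP.
rewrite (eq_measure_integral (pushforward pi p)); last first.
  by move=> A mA _; exact: (esym (hm A mA)).
rewrite (integral_pushforward mp) ?preimage_setT //.
- exact/measurable_EFinP.
- have hb : forall z, `|((g \_ D : T -> R) \o p) z| <= `|Bg|.
    move=> z /=; rewrite /patch; case: ifP => [/set_mem Dz|_].
    exact: le_trans (gb _ Dz) (ler_norm _).
  by rewrite normr0.
  exact: (@bint R _ _ pi ((g \_ D : T -> R) \o p) `|Bg| (measurableT_comp mgt mp) hb).
Qed.

End Transport2.
Section Transport3.
Variables (R : realType) (d : nat).
Local Notation T := (Rd R d).
Local Open Scope ereal_scope.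

Lemma transport (D : set 'rV[R]_d) (g : 'rV[R]_d -> R) (K Bg : R)
  (cD : closed D) (K0 : (0 <= K)%R) (gb : forall x, D x -> (`|g x| <= Bg)%R)
  (gl : forall x y, D x -> D y -> (`|g x - g y| <= K * enorm (x - y))%R)
  (mu1 mu2 : probability T R) (h1 : mu1 (D : set T) = 1) (h2 : mu2 (D : set T) = 1)
  (pi : probability (T * T)%type R) (hpi : is_coupling mu1 mu2 pi)
  (w : R) (w0 : (0 < w)%R) :
  (`|Rintegral mu1 (D : set T) g - Rintegral mu2 (D : set T) g|)%:E <=
  (K * w)%:E + (K / w ^+ 3)%:E *
     \int[pi]_z ((enorm ((z.1 : 'rV[R]_d) - z.2)) ^+ 4)%:E.
Proof.
have mD := closed_meas cD.
have mg := lip_measurable cD gl.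
set gt := (g \_ D : T -> R).
have mgt : measurable_fun (setT : set T) gt.
  exact: (measurable_restrictT (g : T -> R) mD).1 mg.
have gtb : forall x, (`|gt x| <= `|Bg|)%R.
  move=> x; rewrite /gt /patch; case: ifP => [/set_mem Dx|_].
    exact: le_trans (gb _ Dx) (ler_norm _).
  by rewrite normr0.
have mF1 : measurable_fun (setT : set (T * T)%type) (gt \o fst) := measurableT_comp mgt measurable_fst.
have mF2 : measurable_fun (setT : set (T * T)%type) (gt \o snd) := measurableT_comp mgt measurable_snd.
have i1 := @bint R _ _ pi (gt \o fst) _ mF1 (fun z => gtb z.1).
have i2 := @bint R _ _ pi (gt \o snd) _ mF2 (fun z => gtb z.2).
have e1 := @marg R d D g K Bg cD gb gl mu1 pi fst measurable_fst
  (fun A mA => (hpi A mA).1).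
have e2 := @marg R d D g K Bg cD gb gl mu2 pi snd measurable_snd
  (fun A mA => (hpi A mA).2).
rewrite /Rintegral e1 e2.
rewrite -fineB; [|exact: integrable_fin_num i1|exact: integrable_fin_num i2].
rewrite -integralB_EFin //.
have fX : \int[pi]_x ((gt x.1)%:E - (gt x.2)%:E) \is a fin_num.
  rewrite integralB_EFin //.
  by rewrite fin_numB; apply/andP; split; apply: integrable_fin_num.
rewrite -fine_abse // fineK ?abse_fin_num //.
under eq_integral do rewrite -EFinB.
have mh : measurable_fun setT (fun z : (T * T)%type => gt z.1 - gt z.2)%R.
  exact: measurable_funB.
apply: le_trans; first apply: le_abse_integral => //; first exact/measurable_EFinP.
set A1 := (fst @^-1` (~` (D : set T))) : set (T * T)%type.
set A2 := (snd @^-1` (~` (D : set T))) : set (T * T)%type.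
have mA1 : measurable A1.
  by rewrite -[A1]setTI; apply: measurable_fst => //; exact: measurableC.
have mA2 : measurable A2.
  by rewrite -[A2]setTI; apply: measurable_snd => //; exact: measurableC.
set e := fun z : (T * T)%type => (enorm ((z.1 : 'rV[R]_d) - z.2) ^+ 4)%R.
have me : measurable_fun setT e := @cost_meas R d.
have e0 : forall z, (0 <= e z)%R by move=> z; rewrite /e exprn_ge0 // enorm_ge0.
set c1 := (K / w ^+ 3)%R.
have c10 : (0 <= c1)%R by rewrite /c1 divr_ge0 // exprn_ge0 // ltW.
set c2 := (2 * `|Bg|)%R.
have c20 : (0 <= c2)%R by rewrite /c2 mulr_ge0.
set U := fun z => ((K * w) + (c1 * e z + c2 * (\1_A1 z + \1_A2 z)))%R.
have mU : measurable_fun setT U.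
  apply: measurable_funD; first exact: measurable_cst.
  apply: measurable_funD; first exact: measurable_funM (measurable_cst _) me.
  apply: measurable_funM; first exact: measurable_cst.
  by apply: measurable_funD; apply: measurable_indic.
apply: (@le_trans _ _ (\int[pi]_z (U z)%:E)).
  apply: ge0_le_integral => //.
  - by apply/measurableT_comp => //; exact/measurable_EFinP.
  - exact/measurable_EFinP.
  move=> z _; rewrite lee_fin /U.
  have ind0 : forall (A : set (T * T)%type) (z : (T * T)%type), (0 <= (\1_A z : R))%R.
    by move=> A' z'; rewrite indicE; case: (z' \in A').
  have s0 := addr_ge0 (ind0 A1 z) (ind0 A2 z).
  have Kw0 : (0 <= K * w)%R by rewrite mulr_ge0 // ltW.
  have ce0 : (0 <= c1 * e z)%R by rewrite mulr_ge0.
  case: (pselect (D z.1)) => [D1|N1]; last first.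
    have -> : (\1_A1 z : R) = 1%R by rewrite indicE mem_set.
    have : (`|gt z.1 - gt z.2| <= c2)%R.
      apply: (le_trans (ler_normB _ _)); rewrite /c2 mulr_natl mulr2n.
      by apply: lerD.
    have := ind0 A2 z; rewrite -/c2; nra.
  case: (pselect (D z.2)) => [D2|N2]; last first.
    have -> : (\1_A2 z : R) = 1%R by rewrite indicE mem_set.
    have : (`|gt z.1 - gt z.2| <= c2)%R.
      apply: (le_trans (ler_normB _ _)); rewrite /c2 mulr_natl mulr2n.
      by apply: lerD.
    have := ind0 A1 z; rewrite -/c2; nra.
  have -> : (\1_A1 z : R) = 0%R by rewrite indicE memNset //= => /(_ D1).
  have -> : (\1_A2 z : R) = 0%R by rewrite indicE memNset //= => /(_ D2).
  rewrite addr0 mulr0 addr0.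
  have -> : (g \_ D : T -> R) z.1 = g z.1 by rewrite /patch mem_set.
  have -> : (g \_ D : T -> R) z.2 = g z.2 by rewrite /patch mem_set.
  apply: (le_trans (gl _ _ D1 D2)).
  have t0 := enorm_ge0 ((z.1 : 'rV[R]_d) - z.2).
  apply: (le_trans (ler_wpM2l K0 (tw t0 w0))).
  by rewrite /c1 /e mulrDr lerD2l mulrCA mulrC.
have mEF : forall h : (T * T)%type -> R, measurable_fun setT h ->
    measurable_fun setT (fun z => (h z)%:E).
  by move=> h mh0; exact/measurable_EFinP.
have pA1 : pi A1 = 0.
  by rewrite /A1 (hpi _ (measurableC mD)).1 probability_setC // h1 subee.
have pA2 : pi A2 = 0.
  by rewrite /A2 (hpi _ (measurableC mD)).2 probability_setC // h2 subee.
have ind0 : forall (A : set (T * T)%type) (z : (T * T)%type), (0 <= (\1_A z : R))%R.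
  by move=> A' z'; rewrite indicE; case: (z' \in A').
pose W := fun z : (T * T)%type => ((\1_A1 z : R) + \1_A2 z)%R.
have W0 : forall z, (0 <= W z)%R by move=> z; rewrite addr_ge0.
have mW : measurable_fun setT W by apply: measurable_funD; apply: measurable_indic.
pose V := fun z : (T * T)%type => (c1 * e z + c2 * W z)%R.
have V0 : forall z, (0 <= V z)%R by move=> z; rewrite addr_ge0 // mulr_ge0.
have mV : measurable_fun setT V.
  apply: measurable_funD; first exact: measurable_funM (measurable_cst _) me.
  by apply: measurable_funM; first exact: measurable_cst.
have -> : (fun z => (U z)%:E) = (fun z => (K * w)%:E + (V z)%:E).
  by apply/funext => z; rewrite /U EFinD.
rewrite (@ge0_integralD _ _ R pi setT measurableT (fun z => (K * w)%:E)
  (fun z => (V z)%:E)); first last.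
- exact: mEF.
- by move=> z _; rewrite lee_fin.
- exact: measurable_cst.
- by move=> z _; rewrite lee_fin mulr_ge0 // ltW.
rewrite integral_cst // [X in (_ * X)%E](_ : _ = 1); last exact: probability_setT.
rewrite mule1 leeD2l //.
have -> : (fun z => (V z)%:E) = (fun z => c1%:E * (e z)%:E + c2%:E * (W z)%:E).
  by apply/funext => z; rewrite /V EFinD !EFinM.
rewrite (@ge0_integralD _ _ R pi setT measurableT (fun z => c1%:E * (e z)%:E)
  (fun z => c2%:E * (W z)%:E)); first last.
- exact: mEF (measurable_funM (measurable_cst _) mW).
- by move=> z _; rewrite lee_fin mulr_ge0.
- exact: mEF (measurable_funM (measurable_cst _) me).
- by move=> z _; rewrite lee_fin mulr_ge0.
rewrite (@ge0_integralZl _ _ R pi setT measurableT (fun z => (e z)%:E)); first last.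
- by rewrite lee_fin.
- by move=> z _; rewrite lee_fin.
- exact: mEF.
rewrite (@ge0_integralZl _ _ R pi setT measurableT (fun z => (W z)%:E)); first last.
- by rewrite lee_fin.
- by move=> z _; rewrite lee_fin.
- exact: mEF.
have -> : (fun z => (W z)%:E) = (fun z => (\1_A1 z)%:E + (\1_A2 z)%:E).
  by apply/funext => z; rewrite /W EFinD.
rewrite (@ge0_integralD _ _ R pi setT measurableT (fun z => (\1_A1 z)%:E)
  (fun z => (\1_A2 z)%:E)); first last.
- exact: mEF (@measurable_indic _ _ R setT _ mA2).
- by move=> z _; rewrite lee_fin.
- exact: mEF (@measurable_indic _ _ R setT _ mA1).
- by move=> z _; rewrite lee_fin.
have pA1' : (pi : {measure set (T * T)%type -> \bar R}) A1 = 0 := pA1.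
have pA2' : (pi : {measure set (T * T)%type -> \bar R}) A2 = 0 := pA2.
by rewrite !integral_indic // !setIT pA1' pA2' adde0 mule0 adde0.
Qed.

End Transport3.
Section WBound.
Variables (R : realType) (d : nat).
Local Notation T := (Rd R d).
Local Open Scope ereal_scope.

Lemma cost_fin (D : set 'rV[R]_d) (B0 : R) (B00 : (0 <= B0)%R) (cD : closed D)
  (hB : forall x, D x -> forall j, (`|x ord0 j| <= B0)%R)
  (mu1 mu2 : probability T R) (h1 : mu1 (D : set T) = 1) (h2 : mu2 (D : set T) = 1)
  (pi : probability (T * T)%type R) (hpi : is_coupling mu1 mu2 pi) :
  \int[pi]_z ((enorm ((z.1 : 'rV[R]_d) - z.2)) ^+ 4)%:E <=
  ((d%:R * (2 * B0)) ^+ 4)%:E.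
Proof.
have mD := closed_meas cD.
set A1 := (fst @^-1` (~` (D : set T))) : set (T * T)%type.
set A2 := (snd @^-1` (~` (D : set T))) : set (T * T)%type.
have mA1 : measurable A1.
  by rewrite -[A1]setTI; apply: measurable_fst => //; exact: measurableC.
have mA2 : measurable A2.
  by rewrite -[A2]setTI; apply: measurable_snd => //; exact: measurableC.
have pA1 : pi A1 = 0.
  by rewrite /A1 (hpi _ (measurableC mD)).1 probability_setC // h1 subee.
have pA2 : pi A2 = 0.
  by rewrite /A2 (hpi _ (measurableC mD)).2 probability_setC // h2 subee.
set N := A1 `|` A2.
have mN : measurable N by exact: measurableU.
have pN : pi N = 0.
  apply/eqP; rewrite eq_le measure_ge0 andbT.
  apply: le_trans (measureU2 pi mA1 mA2) _.
  rewrite [X in (X + _ <= _)%E](_ : _ = 0); last exact: pA1.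
  rewrite [X in (_ + X <= _)%E](_ : _ = 0); last exact: pA2.
  by rewrite adde0.
set e := fun z : (T * T)%type => (enorm ((z.1 : 'rV[R]_d) - z.2) ^+ 4)%R.
have me : measurable_fun setT e := @cost_meas R d.
have mEe : measurable_fun setT (fun z => (e z)%:E).
  by apply/measurable_EFinP.
have e0 : forall z, (0 <= e z)%R by move=> z; rewrite /e exprn_ge0 // enorm_ge0.
rewrite -(setUv N) ge0_integral_setU //; first last.
- by apply/eqP; rewrite setICr.
- by move=> z _; rewrite lee_fin; exact: e0.
- by rewrite setUv; exact: mEe.
- exact: measurableC.
rewrite null_set_integral //; last exact: measurable_funS mEe.
rewrite add0e.
apply: (@le_trans _ _ (\int[pi]_(z in ~` N) ((d%:R * (2 * B0)) ^+ 4)%:E)).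
  apply: ge0_le_integral => //.
  - exact: measurableC.
  - by move=> z _; rewrite lee_fin; exact: e0.
  - exact: (measurable_funS measurableT (@subsetT _ _) mEe).
  move=> z /= nN; rewrite lee_fin /e.
  have D1 : D z.1.
    by apply: contrapT => nd; apply: nN; left.
  have D2 : D z.2.
    by apply: contrapT => nd; apply: nN; right.
  apply: lerXn2r; rewrite ?nnegrE ?enorm_ge0 //.
    by rewrite mulr_ge0 // mulr_ge0.
  apply: (le_trans (enorm_le_sum _)).
  have -> : (d%:R * (2 * B0) = \sum_(j < d) (2 * B0))%R.
    by rewrite sumr_const card_ord mulr_natl.
  apply: ler_sum => j _; rewrite !mxE mulr_natl mulr2n.
  apply: (le_trans (ler_normB _ _)); apply: lerD; exact: hB.
rewrite integral_cst //; last exact: measurableC.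
rewrite -[X in _ <= X]mule1; apply: lee_wpmul2l.
  by rewrite lee_fin exprn_ge0 // mulr_ge0 // mulr_ge0.
exact: (probability_le1 pi (measurableC mN)).
Qed.

End WBound.
Section WBound2.
Variables (R : realType) (d : nat).
Local Notation T := (Rd R d).

Lemma prod_coupling (mu1 mu2 : probability T R) :
  is_coupling mu1 mu2 ((mu1 \x mu2)%E : probability (T * T)%type R).
Proof.
move=> A mA; split.
  rewrite -setXT; transitivity (mu1 A * mu2 setT)%E.
    exact: product_measure1E.
  rewrite [X in (_ * X)%E](_ : _ = 1%E) ?mule1 //; exact: probability_setT.
rewrite -setTX; transitivity (mu1 setT * mu2 A)%E.
  exact: product_measure1E.
rewrite [X in (X * _)%E](_ : _ = 1%E) ?mul1e //; exact: probability_setT.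
Qed.

End WBound2.
Section WBound3.
Variables (R : realType) (d : nat).
Local Notation T := (Rd R d).

Lemma wbound (D : set 'rV[R]_d) (g : 'rV[R]_d -> R) (K Bg B0 : R)
  (cD : closed D) (K0 : 0 <= K) (B00 : 0 <= B0)
  (gb : forall x, D x -> `|g x| <= Bg)
  (gl : forall x y, D x -> D y -> `|g x - g y| <= K * enorm (x - y))
  (hB : forall x, D x -> forall j, `|x ord0 j| <= B0)
  (mu1 mu2 : probability T R) (h1 : mu1 (D : set T) = 1%E)
  (h2 : mu2 (D : set T) = 1%E) :
  `|Rintegral mu1 (D : set T) g - Rintegral mu2 (D : set T) g| <=
  2 * K * W4 mu1 mu2.
Proof.
rewrite /W4; set cs := ereal_inf _.
set Dl := `|_ - _|.
have cs0 : (0 <= cs)%E.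
  apply: le_ereal_inf_tmp => c [pi [_ ->]]; apply: integral_ge0 => z _.
  by rewrite lee_fin exprn_ge0 // enorm_ge0.
have csE0 : (cs <= ((d%:R * (2 * B0)) ^+ 4)%:E)%E.
  have hp := @prod_coupling R d mu1 mu2.
  apply: le_trans (cost_fin B00 cD hB h1 h2 hp).
  apply: ereal_inf_lbound; exists ((mu1 \x mu2)%E : probability (T * T)%type R).
  by split.
have csfin : cs \is a fin_num.
  by rewrite ge0_fin_numE // (le_lt_trans csE0 (ltry _)).
set C := fine cs.
have C0 : 0 <= C by apply: fine_ge0.
have csE : cs = C%:E by rewrite /C fineK.
have key : forall w, 0 < w -> Dl <= K * w + K / w ^+ 3 * C.
  move=> w w0; apply/ler_addgt0Pr => e e0.
  set a := K / w ^+ 3.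
  have a0 : 0 <= a by rewrite /a divr_ge0 // exprn_ge0 // ltW.
  set eps := e / (a + 1).
  have a10 : 0 < a + 1 by rewrite ltr_wpDl.
  have eps0 : 0 < eps by rewrite /eps divr_gt0.
  have : (cs < (C + eps)%:E)%E by rewrite csE lte_fin ltrDl.
  move/ereal_inf_lt => [c [pi [hpi ->]] hc].
  have ht := transport cD K0 gb gl h1 h2 hpi w0.
  have a0' : (0%R <= a%:E)%E by rewrite lee_fin.
  have hc' := lee_wpmul2l a0' (ltW hc).
  have := le_trans ht (leeD2l _ hc').
  rewrite -EFinM -EFinD lee_fin -/Dl => hD.
  have : a * eps <= e.
    rewrite /eps mulrA ler_pdivrMr //; nra.
  move: hD; rewrite mulrDr; lra.
set W := C `^ 4%:R^-1.
have W0 : 0 <= W by apply: powR_ge0.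
have W4E : W ^+ 4 = C.
  rewrite /W -powR_mulrn ?powR_ge0 // -powRrM mulVf ?pnatr_eq0 // powRr1 //.
have [Wpos|] := ltP 0 W; last first.
  move=> Wle; have Wz : W = 0 by apply/eqP; rewrite eq_le Wle W0.
  rewrite Wz mulr0; apply/ler_addgt0Pr => e e0; rewrite add0r.
  have hC : C = 0 by rewrite -W4E Wz expr0n.
  have k1 : 0 < K + 1 by rewrite ltr_wpDl.
  have := key (e / (K + 1)) (divr_gt0 e0 k1); rewrite hC mulr0 addr0.
  move=> h; apply: le_trans h _.
  rewrite mulrA ler_pdivrMr //; nra.
have := key W Wpos; rewrite -W4E.
have -> : K / W ^+ 3 * W ^+ 4 = K * W.
  have hW : W != 0 := lt0r_neq0 Wpos.
  by field.
move=> h; apply: le_trans h _; lra.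
Qed.

End WBound3.
Section Aux.
Variables (R : realType) (d : nat).
Local Notation T := (Rd R d).

Lemma Rint_bounds (mu : probability T R) (D : set 'rV[R]_d) (cD : closed D)
  (h : 'rV[R]_d -> R) (K lo hi : R)
  (hl : forall x y, D x -> D y -> `|h x - h y| <= K * enorm (x - y))
  (hlo : forall x, D x -> lo <= h x) (hhi : forall x, D x -> h x <= hi)
  (hD : mu (D : set T) = 1%E) :
  lo <= Rintegral mu (D : set T) h <= hi.
Proof.
have mD := closed_meas cD.
have mh := lip_measurable cD hl.
have muf : (mu (D : set T) < +oo)%E by rewrite hD ltry.
have ih : mu.-integrable (D : set T) (EFin \o (h : T -> R)).
  apply: (measurable_bounded_integrable mD muf mh).
  exists (`|lo| + `|hi|); split; first exact: num_real.
  move=> M hM x Dx /=; apply: le_trans (ltW hM).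
  have h1 := hlo x Dx; have h2 := hhi x Dx.
  have a1 := ler_norm hi; have a2 := ler_norm (- lo); rewrite normrN in a2.
  have a3 := normr_ge0 lo; have a4 := normr_ge0 hi.
  rewrite ler_norml; apply/andP; split; lra.
have ic : forall c : R, mu.-integrable (D : set T) (EFin \o (fun _ : T => c)).
  move=> c; apply: (measurable_bounded_integrable mD muf (measurable_cst c)).
  exists `|c|; split; first exact: num_real.
  by move=> M hM x Dx /=; apply: ltW.
have fD : fine (mu (D : set T)) = 1 by rewrite hD.
apply/andP; split.
  have := le_Rintegral mD (ic lo) ih hlo.
  by rewrite Rintegral_cst // fD mulr1.
have := le_Rintegral mD ih (ic hi) hhi.
by rewrite Rintegral_cst // fD mulr1.
Qed.

Lemma expR_lip0 (a b : R) : a <= b -> a <= 0 -> b <= 0 ->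
  `|expR a - expR b| <= `|a - b|.
Proof.
move=> ab a0 b0.
have e1 : expR a <= expR b by rewrite ler_expR.
rewrite ler0_norm ?subr_le0 // ler0_norm ?subr_le0 //.
have h1 := expR_ge1Dx (a - b).
have h2 : expR b <= 1 by rewrite -expR0 ler_expR.
have h3 : expR a = expR b * expR (a - b) by rewrite -expRD addrC subrK.
have h4 : 0 < expR b := expR_gt0 b.
have h5 : expR (a - b) <= 1 by rewrite -expR0 ler_expR subr_le0.
rewrite h3; nra.
Qed.

Lemma expR_lip (a b : R) : a <= 0 -> b <= 0 -> `|expR a - expR b| <= `|a - b|.
Proof.
move=> a0 b0; have [h|h] := boolP (a <= b); first exact: expR_lip0.
rewrite distrC [`|a - b|]distrC; apply: expR_lip0 => //; rewrite -ltNge in h; exact: ltW.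
Qed.

Lemma quot_bound (N1 N2 D1 D2 m B : R) : 0 < m -> m <= D1 -> m <= D2 ->
  `|N2| <= B ->
  `|N1 / D1 - N2 / D2| <= `|N1 - N2| / m + B * `|D1 - D2| / m ^+ 2.
Proof.
move=> m0 m1 m2 nb.
have d10 : 0 < D1 by apply: lt_le_trans m1.
have d20 : 0 < D2 by apply: lt_le_trans m2.
have -> : N1 / D1 - N2 / D2 = (N1 - N2) / D1 + N2 * (D2 - D1) / (D1 * D2).
  by field; rewrite !lt0r_neq0.
apply: (le_trans (ler_normD _ _)); apply: lerD.
  rewrite normrM normfV (gtr0_norm d10).
  apply: ler_wpM2l; first exact: normr_ge0.
  by rewrite lef_pV2 ?posrE.
have dd : 0 < D1 * D2 by apply: mulr_gt0.
rewrite normrM normfV (gtr0_norm dd) normrM [`|D2 - D1|]distrC.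
apply: ler_pM.
- by apply: mulr_ge0.
- by rewrite invr_ge0 ltW.
- by apply: ler_wpM2r.
rewrite expr2 lef_pV2 ?posrE ?mulr_gt0 //.
by apply: ler_pM => //; apply: ltW.
Qed.

Lemma diag_mxB (u v : 'rV[R]_d) (s : R) :
  s *: diag_mx u - s *: diag_mx v = s *: diag_mx (u - v).
Proof.
apply/matrixP => i j; rewrite !mxE.
by case: (i == j); rewrite ?mulr1n ?mulr0n ?mulrBr // mulr0 subr0.
Qed.

Lemma mxnorm_le_enorm (v : 'rV[R]_d) : `|v| <= enorm v.
Proof.
have -> : `|v| = mx_norm v by [].
rewrite mx_normrE; apply: bigmax_le; first exact: enorm_ge0.
move=> [i j] _ /=; rewrite (ord1 i); exact: coord_le_enorm.
Qed.

End Aux.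
Theorem lemma3p7 (R : realType) (d : nat) (G : set 'rV[R]_d)
  (f : 'rV[R]_d -> R) (L_f alpha beta sigma : R) :
  bounded_domain G -> C3_boundary G ->
  (forall x, closure G x -> 0 <= f x) ->
  0 < inf (f @` closure G) ->
  (exists! x, closure G x /\ forall y, closure G y -> f x <= f y) ->
  (forall x y, closure G x -> closure G y ->
     `|f x - f y| <= L_f * enorm (x - y)) ->
  0 < alpha -> 0 < beta -> 0 < sigma ->
  (exists L : R, 0 < L /\
    forall (t : R) (x y : 'rV[R]_d) (mu1 mu2 : probability (Rd R d) R),
      0 <= t -> closure G x -> closure G y ->
      probOn (closure G) mu1 -> probOn (closure G) mu2 ->
      enorm (bdrift (closure G) alpha f beta t x mu1
             - bdrift (closure G) alpha f beta t y mu2)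
      + fnorm (sdiff (closure G) alpha f sigma t x mu1
               - sdiff (closure G) alpha f sigma t y mu2)
      <= L * (enorm (x - y) + W4 mu1 mu2))
  /\ (forall (x : 'rV[R]_d) (mu : probability (Rd R d) R),
        closure G x -> probOn (closure G) mu ->
        continuous (fun t : R => bdrift (closure G) alpha f beta t x mu) /\
        continuous (fun t : R => sdiff (closure G) alpha f sigma t x mu)).
Proof.
move=> [[x0 Gx0] [_ [_ [M hM]]]] _ f0 _ _ hf a0 b0 s0.
split; last first.
  by move=> x mu _ _; split; exact: cst_continuous.
set D := closure G.
have cD : closed D := @closed_closure _ G.
have Dx0 : D x0 := subset_closure Gx0.
set M' := `|M| + 1.
have M'0 : 0 < M' by rewrite /M' ltr_wpDl.
have Gball : G `<=` ball (0 : 'rV[R]_d) M'.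
  move=> x Gx; rewrite mx_norm_ball /ball_ /= sub0r normrN.
  apply: le_lt_trans (mxnorm_le_enorm x) _; apply: le_lt_trans (hM x Gx) _.
  rewrite /M'; have := ler_norm M; lra.
have cb : closed_ball (0 : 'rV[R]_d) M' = closure (closed_ball 0 M').
  by apply/closure_id; exact: closed_ball_closed.
have Dsub : D `<=` closed_ball 0 M'.
  have hs : G `<=` closed_ball (0 : 'rV[R]_d) M'.
    exact: subset_trans Gball (@subset_closed_ball _ _ 0 M').
  move=> x Dx; rewrite cb; apply: (closureS hs); exact: Dx.
set B0 := 2 * M'.
have B0p : 0 < B0 by rewrite /B0 mulr_gt0.
have B00 : 0 <= B0 := ltW B0p.
have hB : forall x, D x -> forall j, `|x ord0 j| <= B0.
  move=> x Dx j.
  have e : B0 / 2 = M' by rewrite /B0; field.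
  have := @subset_closure_half _ _ (0 : 'rV[R]_d) B0 B0p x.
  rewrite e => /(_ (Dsub x Dx)).
  rewrite mx_norm_ball /ball_ /= sub0r normrN => hx.
  exact: le_trans (coord_le_mxnorm _ _) (ltW hx).
set Lf := `|L_f|.
have Lf0 : 0 <= Lf := normr_ge0 _.
have hf' : forall x y, D x -> D y -> `|f x - f y| <= Lf * enorm (x - y).
  move=> x y Dx Dy; apply: (le_trans (hf x y Dx Dy)).
  by apply: ler_wpM2r; [exact: enorm_ge0|exact: ler_norm].
have diam : forall x y, D x -> D y -> enorm (x - y) <= d%:R * (2 * B0).
  move=> x y Dx Dy; apply: (le_trans (enorm_le_sum _)).
  have -> : (d%:R * (2 * B0) = \sum_(j < d) (2 * B0))%R.
    by rewrite sumr_const card_ord mulr_natl.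
  apply: ler_sum => j _; rewrite !mxE mulr_natl mulr2n.
  apply: (le_trans (ler_normB _ _)); apply: lerD; exact: hB.
set Fmax := f x0 + Lf * (d%:R * (2 * B0)).
have fub : forall x, D x -> f x <= Fmax.
  move=> x Dx; have h1 := hf' x x0 Dx Dx0; have h2 := diam x x0 Dx Dx0.
  have h3 : Lf * enorm (x - x0) <= Lf * (d%:R * (2 * B0)) by apply: ler_wpM2l.
  move: h1; rewrite ler_norml => /andP[_ h1]; rewrite /Fmax; lra.
set e := fun x : 'rV[R]_d => expR (- alpha * f x).
set m0 := expR (- alpha * Fmax).
have m00 : 0 < m0 := expR_gt0 _.
have elo : forall x, D x -> m0 <= e x.
  move=> x Dx; rewrite /e /m0 ler_expR !mulNr lerN2 ler_pM2l //; exact: fub.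
have ehi : forall x, D x -> e x <= 1.
  move=> x Dx; rewrite /e -expR0 ler_expR mulNr oppr_le0 mulr_ge0 //; first exact: ltW.
  exact: f0.
set KD := alpha * Lf.
have KD0 : 0 <= KD by rewrite /KD mulr_ge0 // ltW.
have el : forall x y, D x -> D y -> `|e x - e y| <= KD * enorm (x - y).
  move=> x y Dx Dy; apply: (le_trans (expR_lip _ _)).
  - by rewrite mulNr oppr_le0 mulr_ge0 ?(ltW a0) ?f0.
  - by rewrite mulNr oppr_le0 mulr_ge0 ?(ltW a0) ?f0.
  rewrite -mulrBr normrM normrN (gtr0_norm a0) /KD -mulrA ler_pM2l //.
  exact: (hf' x y Dx Dy).
set KN := 1 + B0 * KD.
have KN0 : 0 <= KN by rewrite /KN addr_ge0 // mulr_ge0.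
have gb : forall (i : 'I_d) x, D x -> `|x 0 i * e x| <= B0.
  move=> i x Dx; rewrite normrM (ger0_norm (ltW (expR_gt0 _))).
  rewrite -[B0]mulr1; apply: ler_pM.
  - exact: normr_ge0.
  - exact: ltW (expR_gt0 _).
  - exact: hB.
  - exact: ehi.
have gl : forall (i : 'I_d) x y, D x -> D y ->
    `|x 0 i * e x - y 0 i * e y| <= KN * enorm (x - y).
  move=> i x y Dx Dy.
  have -> : x 0 i * e x - y 0 i * e y = (x 0 i - y 0 i) * e x + y 0 i * (e x - e y).
    by ring.
  apply: (le_trans (ler_normD _ _)).
  rewrite /KN [X in _ <= X]mulrDl mul1r -mulrA; apply: lerD.
    rewrite normrM (ger0_norm (ltW (expR_gt0 _))) -[enorm _]mulr1.
    apply: ler_pM.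
    - exact: normr_ge0.
    - exact: ltW (expR_gt0 _).
    - have := coord_le_enorm (x - y) i; rewrite !mxE; exact.
    - exact: ehi.
  rewrite normrM; apply: ler_pM.
  - exact: normr_ge0.
  - exact: normr_ge0.
  - exact: hB.
  - exact: el.
set C1 := 2 * KN / m0 + B0 * (2 * KD) / m0 ^+ 2.
have C10 : 0 <= C1.
  apply: addr_ge0; apply: divr_ge0.
  - by apply: mulr_ge0.
  - exact: ltW.
  - by apply: mulr_ge0 => //; apply: mulr_ge0.
  - by apply: exprn_ge0; apply: ltW.
set L := (beta + sigma) * d%:R * (1 + C1) + 1.
exists L; split.
  rewrite /L ltr_wpDl //; apply: mulr_ge0; last by apply: addr_ge0.
  by apply: mulr_ge0 => //; apply: addr_ge0; apply: ltW.
move=> t x y mu1 mu2 _ Dx Dy p1 p2.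
have W0 : 0 <= W4 mu1 mu2 by rewrite /W4 powR_ge0.
set W := W4 mu1 mu2.
set X1 := Xbar D alpha f mu1.
set X2 := Xbar D alpha f mu2.
have hX : forall j, `|X1 ord0 j - X2 ord0 j| <= C1 * W.
  move=> j; rewrite /X1 /X2 /Xbar !mxE.
  have hD1 := Rint_bounds cD el elo ehi p1.
  have hD2 := Rint_bounds cD el elo ehi p2.
  have gbl : forall x, D x -> - B0 <= x 0 j * e x.
    by move=> z Dz; have := gb j z Dz; rewrite ler_norml => /andP[].
  have gbh : forall x, D x -> x 0 j * e x <= B0.
    by move=> z Dz; have := gb j z Dz; rewrite ler_norml => /andP[].
  have hN2 := Rint_bounds cD (gl j) gbl gbh p2.
  have wN := @wbound R d D (fun x => x 0 j * e x) KN B0 B0 cD KN0 B00 (gb j) (gl j) hB mu1 mu2 p1 p2.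
  have eb1 : forall z, D z -> `|e z| <= 1.
    by move=> z Dz; rewrite ger0_norm ?(ltW (expR_gt0 _)) //; exact: ehi.
  have hD := @wbound R d D e KD 1 B0 cD KD0 B00 eb1 el hB mu1 mu2 p1 p2.
  move: hD1 hD2 hN2 => /andP[l1 _] /andP[l2 _] /andP[n1 n2].
  have nb : `|Rintegral mu2 (D : set (Rd R d)) (fun x => x 0 j * e x)| <= B0.
    by rewrite ler_norml n1 n2.
  apply: (le_trans (quot_bound _ m00 l1 l2 nb)).
  have t1 : `|Rintegral mu1 (D : set (Rd R d)) (fun x => x 0 j * e x) -
             Rintegral mu2 (D : set (Rd R d)) (fun x => x 0 j * e x)| / m0
            <= 2 * KN * W / m0.
    by rewrite ler_pM2r ?invr_gt0.
  have t2 : B0 * `|Rintegral mu1 (D : set (Rd R d)) e -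
                  Rintegral mu2 (D : set (Rd R d)) e| / m0 ^+ 2
            <= B0 * (2 * KD * W) / m0 ^+ 2.
    by rewrite ler_pM2r ?invr_gt0 ?exprn_gt0 // ler_wpM2l.
  apply: (le_trans (lerD t1 t2)).
  suff -> : C1 * W = 2 * KN * W / m0 + B0 * (2 * KD * W) / m0 ^+ 2 by [].
  rewrite /C1; have m0n : m0 != 0 := lt0r_neq0 m00; field; exact: m0n.
rewrite /bdrift /sdiff -/X1 -/X2 -scalerBr diag_mxB enormZ fnorm_diag.
rewrite (gtr0_norm b0) (gtr0_norm s0).
set u := (x - X1) - (y - X2).
set E := enorm (x - y).
have E0 : 0 <= E := enorm_ge0 _.
have hu : enorm u <= d%:R * (E + C1 * W).
  apply: (le_trans (enorm_le_sum u)).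
  have -> : d%:R * (E + C1 * W) = \sum_(j < d) (E + C1 * W).
    by rewrite sumr_const card_ord mulr_natl.
  apply: ler_sum => j _.
  have -> : u ord0 j = (x ord0 j - y ord0 j) - (X1 ord0 j - X2 ord0 j).
    rewrite /u !mxE; ring.
  apply: (le_trans (ler_normB _ _)); apply: lerD; last exact: hX.
  by have := coord_le_enorm (x - y) j; rewrite !mxE.
set U := enorm u.
have U0 : 0 <= U := enorm_ge0 _.
have P0 : 0 <= beta + sigma by rewrite addr_ge0 // ltW.
have dd0 : 0 <= d%:R :> R by [].
have s1 : (beta + sigma) * U <= (beta + sigma) * (d%:R * (E + C1 * W)).
  exact: ler_wpM2l.
have s2 : E + C1 * W <= (1 + C1) * (E + W).
  have h := mulr_ge0 C10 E0.
  have -> : (1 + C1) * (E + W) = E + C1 * W + (W + C1 * E) by ring.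
  by rewrite lerDl addr_ge0.
have s3 : d%:R * (E + C1 * W) <= d%:R * ((1 + C1) * (E + W)).
  exact: ler_wpM2l.
have s4 : (beta + sigma) * (d%:R * (E + C1 * W)) <=
          (beta + sigma) * (d%:R * ((1 + C1) * (E + W))).
  exact: ler_wpM2l.
have -> : beta * U + sigma * U = (beta + sigma) * U by ring.
apply: (le_trans s1); apply: (le_trans s4).
have EW : 0 <= E + W by apply: addr_ge0.
have -> : ((beta + sigma) * d%:R * (1 + C1) + 1) * (E + W) =
  (beta + sigma) * (d%:R * ((1 + C1) * (E + W))) + (E + W) by ring.
by rewrite lerDl.
Qed.
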